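(* For $n\ge1$ let $M_n$ be the number of domino tilings of $K_4\times P_n$. Then $M_n=4M_{n-1}+4M_{n-2}-M_{n-3}$ for $n\ge4$, and for all $n\ge1$, $$M_n=\frac17\Big[\Big(\tfrac{5+\sqrt{21}}2\Big)^{n+1}+\Big(\tfrac{5-\sqrt{21}}2\Big)^{n+1}+2(-1)^n\Big].$$
   Context: $H\times K$ denotes the Cartesian product of graphs. $P_n$ is the path on $n$ vertices and $K_4$ is the complete graph on $4$ vertices. A domino tiling of a finite graph is a perfect matching, and the number of domino tilings is the number of perfect matchings. *)

(* Defs.v *)
From HB Require Import structures.
From mathcomp Require Import all_boot all_order all_algebra.
Set Implicit Arguments. Unset Strict Implicit. Unset Printing Implicit Defensive.
Import Order.TTheory GRing.Theory Num.Theory.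

Definition vtx (n : nat) : finType := ('I_4 * 'I_n)%type.

Definition adjK4 : rel 'I_4 := fun a a' => a != a'.

Definition adjP (n : nat) : rel 'I_n :=
  fun b b' => (b.+1 == b' :> nat) || (b'.+1 == b :> nat).

Definition adjKP (n : nat) : rel (vtx n) :=
  fun u v => (adjK4 u.1 v.1 && (u.2 == v.2)) || ((u.1 == v.1) && adjP u.2 v.2).

Definition is_edge (n : nat) (e : {set vtx n}) : bool :=
  [exists u : vtx n, exists v : vtx n, adjKP u v && (e == [set u; v])].

Definition perfect_matching (n : nat) (M : {set {set vtx n}}) : bool :=
  [forall e in M, is_edge e] &&
  [forall v : vtx n, #|[set e in M | v \in e]| == 1%N].

Definition domino_count (n : nat) : nat :=
  #|[set M : {set {set vtx n}} | perfect_matching M]|.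

(* Main.v *)
Require Import Defs.
From HB Require Import structures.
From mathcomp Require Import all_boot all_order all_algebra.
From mathcomp Require Import ring lra zify.
Import Order.TTheory GRing.Theory Num.Theory.
Set Implicit Arguments. Unset Strict Implicit. Unset Printing Implicit Defensive.

Fixpoint lists_of {T : Type} (A : seq T) (k : nat) : seq (seq T) :=
  if k is k'.+1 then [seq x :: w | x <- A, w <- lists_of A k'] else [:: [::]].

Lemma mem_lists_of (T : eqType) (A : seq T) k s :
  (s \in lists_of A k) = (size s == k) && all (mem A) s.
Proof.
elim: k s => [|k IH] [|x s] //=.
- apply/allpairsP => -[[y w] [_ _]] //.
- apply/allpairsP/andP => [[[y w] /= [yA wL [-> ->]]]|[/= Hs /andP [xA sA]]].
    by move: wL; rewrite IH => /andP [/eqP -> ->]; rewrite yA.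
  by exists (x, s); split=> //; rewrite IH -eqSS Hs.
Qed.

Lemma uniq_lists_of (T : eqType) (A : seq T) k : uniq A -> uniq (lists_of A k).
Proof.
move=> uA; elim: k => [|k IH] //=.
by apply: allpairs_uniq => // -[x1 w1] [x2 w2] _ _ /= [-> ->].
Qed.

Lemma lists_ofS (T : Type) (A : seq T) k :
  lists_of A k.+1 = [seq x :: w | x <- A, w <- lists_of A k].
Proof. by []. Qed.

Definition letters := lists_of (iota 0 6) 4.
Definition zeros := nseq 4 false.
Definition loc (x : seq nat) :=
  all (fun a => let c := nth 0 x a in (c < 4) ==> ((c != a) && (nth 0 x c == a))) (iota 0 4).
Definition Up (x : seq nat) := [seq c == 4 | c <- x].
Definition Dn (x : seq nat) := [seq c == 5 | c <- x].
Fixpoint vs (s : seq (seq nat)) : bool :=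
  match s with
  | [::] => true
  | x :: s' => [&& loc x, (if s' is y :: _ then Dn y == Up x else Up x == zeros) & vs s']
  end.
Definition valid s := vs s && (if s is x :: _ then Dn x == zeros else true).
Definition words := lists_of letters.
Definition F k x := count (fun w => vs (x :: w)) (words k).
Definition P k Q := sumn [seq F k x | x <- letters & Dn x == Q].
Definition T (g : seq bool -> nat) Q := sumn [seq loc x * g (Up x) | x <- letters & Dn x == Q].

Lemma sumn_filter (A : Type) (p : pred A) (f : A -> nat) s :
  sumn [seq f x | x <- s & p x] = sumn [seq p x * f x | x <- s].
Proof. by elim: s => //= x s IH; case: (p x) => /=; rewrite IH // mul1n. Qed.

Lemma sumnM (A : Type) c (f : A -> nat) s :
  sumn [seq c * f x | x <- s] = c * sumn [seq f x | x <- s].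
Proof. by elim: s => //= [|x s ->]; rewrite ?muln0 ?mulnDr. Qed.

Lemma sumnDf (A : Type) (f g : A -> nat) s :
  sumn [seq f x + g x | x <- s] = sumn [seq f x | x <- s] + sumn [seq g x | x <- s].
Proof. by elim: s => //= x s ->; rewrite addnACA. Qed.

Lemma eq_sumn (A : Type) (f g : A -> nat) s :
  (forall x, f x = g x) -> sumn [seq f x | x <- s] = sumn [seq g x | x <- s].
Proof. by move=> fg; elim: s => //= x s ->; rewrite fg. Qed.

Lemma count_cons_map k x (p : pred (seq (seq nat))) :
  count p [seq x :: w | w <- words k] = count (fun w => p (x :: w)) (words k).
Proof. by rewrite count_map. Qed.

Lemma count_b (A : Type) (b : bool) (p : pred A) s :
  count (fun w => b && p w) s = b * count p s.
Proof. by case: b => //=; rewrite ?mul1n ?mul0n // count_pred0. Qed.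

Lemma count_valid k : count valid (words k.+1) = P k zeros.
Proof.
rewrite /words lists_ofS count_flatten -map_comp /P sumn_filter.
apply: eq_sumn => x /=; rewrite count_map /F.
rewrite -/(words k) -count_b; apply: eq_count => w /=.
by rewrite /valid andbC.
Qed.

Lemma F0 x : F 0 x = loc x && (Up x == zeros).
Proof. by rewrite /F /= andbT addn0. Qed.

Lemma FS k x : F k.+1 x = loc x * P k (Up x).
Proof.
rewrite /F /words lists_ofS count_flatten -map_comp /P sumn_filter -sumnM.
apply: eq_sumn => y /=; rewrite count_map mulnA mulnb /F -count_b.
by apply: eq_count => w /=; rewrite andbA.
Qed.

Lemma PS k Q : P k.+1 Q = T (P k) Q.
Proof. by rewrite /P /T; apply: eq_sumn => x; rewrite FS. Qed.

Lemma T_ext g1 g2 Q : (forall Q, g1 Q = g2 Q) -> T g1 Q = T g2 Q.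
Proof. by move=> e; rewrite /T; apply: eq_sumn => x; rewrite e. Qed.

Lemma T_add g1 g2 Q : T (fun Q => g1 Q + g2 Q) Q = T g1 Q + T g2 Q.
Proof. by rewrite /T -sumnDf; apply: eq_sumn => x; rewrite mulnDr. Qed.

Lemma T_scal c g Q : T (fun Q => c * g Q) Q = c * T g Q.
Proof. by rewrite /T -sumnM; apply: eq_sumn => x; rewrite mulnCA. Qed.

Definition states := lists_of [:: true; false] 4.

Fixpoint Ptab k : seq nat :=
  if k is k'.+1 then
    let t := Ptab k' in
    [seq sumn [seq loc x * nth 0 t (index (Up x) states) | x <- letters & Dn x == Q] | Q <- states]
  else [seq P 0 Q | Q <- states].

Lemma Up_states x : x \in letters -> Up x \in states.
Proof.
rewrite /letters /states !mem_lists_of => /andP [/eqP Hs _].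
rewrite size_map Hs eqxx /=; apply/allP => b _; by case: b.
Qed.

Lemma PtabS k : Ptab k.+1 =
  [seq sumn [seq loc x * nth 0 (Ptab k) (index (Up x) states) | x <- letters & Dn x == Q] | Q <- states].
Proof. by []. Qed.

Lemma PtabE k : Ptab k = [seq P k Q | Q <- states].
Proof.
elim: k => [|k IH] //; rewrite PtabS IH; apply: eq_map => Q.
rewrite PS /T; congr sumn; apply/eq_in_map => x.
rewrite mem_filter => /andP [_ xL].
by rewrite (nth_map [::]) ?index_mem ?Up_states // nth_index // Up_states.
Qed.

Definition check :=
  let t0 := Ptab 0 in let t1 := Ptab 1 in let t2 := Ptab 2 in let t3 := Ptab 3 in
  all (fun i => nth 0 t3 i + nth 0 t0 i == 4 * nth 0 t2 i + 4 * nth 0 t1 i) (iota 0 16).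

Lemma check_ok : check. Proof. by vm_compute. Qed.

Lemma size_Dn x : x \in letters -> size (Dn x) = 4.
Proof. by rewrite /letters mem_lists_of size_map => /andP [/eqP]. Qed.

Lemma mem_states Q : (Q \in states) = (size Q == 4).
Proof.
rewrite /states mem_lists_of; case: (size Q == 4) => //=.
by apply/allP => b _; case: b.
Qed.

Lemma P_out k Q : Q \notin states -> P k Q = 0.
Proof.
move=> HQ; rewrite /P (@eq_in_filter _ _ pred0) ?filter_pred0 // => x xL /=.
by apply/eqP => E; move: HQ; rewrite mem_states -E size_Dn.
Qed.

Lemma P_tab k Q : Q \in states -> P k Q = nth 0 (Ptab k) (index Q states).
Proof. by move=> HQ; rewrite PtabE (nth_map [::]) ?index_mem // nth_index. Qed.

Lemma base Q : P 3 Q + P 0 Q = 4 * P 2 Q + 4 * P 1 Q.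
Proof.
case HQ: (Q \in states); last by rewrite !P_out ?HQ.
rewrite !P_tab //; apply/eqP.
have := check_ok; rewrite /check => /allP; apply.
by rewrite mem_iota leq0n add0n (_ : 16 = size states) ?index_mem.
Qed.

Lemma recP k Q : P k.+3 Q + P k Q = 4 * P k.+2 Q + 4 * P k.+1 Q.
Proof.
elim: k Q => [|k IH] Q; first exact: base.
rewrite !(PS k.+3) !(PS k.+2) !(PS k.+1) (PS k) -T_add.
rewrite (T_ext _ IH) T_add !T_scal //.
Qed.


Section A.
Variable n : nat.
Implicit Types (u v w : vtx n).

Lemma adj_irr v : adjKP v v = false.
Proof. by rewrite /adjKP /adjK4 /adjP eqxx /= !orbb -[X in _ == X]addn0 -addn1 eqn_add2l. Qed.

Lemma adj_sym u v : adjKP u v = adjKP v u.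
Proof.
rewrite /adjKP /adjK4 /adjP [u.1 == v.1]eq_sym [u.2 == v.2]eq_sym.
by rewrite [(_.+1 == _) || _]orbC.
Qed.

Definition inv_ok (p : {ffun vtx n -> vtx n}) := [forall v, adjKP v (p v) && (p (p v) == v)].

Lemma inv_okP (p : {ffun vtx n -> vtx n}) : reflect (forall v, adjKP v (p v) /\ p (p v) = v) (inv_ok p).
Proof.
apply: (iffP forallP) => H v; first by case/andP: (H v) => -> /eqP.
by case: (H v) => -> ->; rewrite eqxx.
Qed.

Lemma set2_eq (T : finType) (a b c : T) : b != a -> [set a; b] = [set a; c] -> b = c.
Proof.
move=> ba E; have : b \in [set a; c] by rewrite -E set22.
by rewrite in_set2 (negbTE ba) => /eqP.
Qed.

Definition gM (p : {ffun vtx n -> vtx n}) : {set {set vtx n}} := [set [set v; p v] | v : vtx n].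

Lemma neq_adj v u : adjKP v u -> u != v.
Proof. by apply: contraTneq => ->; rewrite adj_irr. Qed.

Lemma gM_pm (p : {ffun vtx n -> vtx n}) : inv_ok p -> perfect_matching (gM p).
Proof.
move/inv_okP => H; apply/andP; split.
  apply/forall_inP => e /imsetP [v _ ->]; apply/existsP; exists v; apply/existsP; exists (p v).
  by rewrite (H v).1 eqxx.
apply/forallP => w; apply/eqP.
rewrite (_ : [set e in gM p | w \in e] = [set [set w; p w]]) ?cards1 //.
apply/setP => e; rewrite !inE; apply/andP/eqP => [[/imsetP [v _ ->]]|->].
  rewrite in_set2 => /orP [/eqP ->//|/eqP ->]; by rewrite (H v).2 setUC.
split; [by apply/imsetP; exists w | exact: set21].
Qed.

Lemma gM_inj (p q : {ffun vtx n -> vtx n}) : inv_ok p -> inv_ok q -> gM p = gM q -> p = q.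
Proof.
move=> /inv_okP Hp /inv_okP Hq E; apply/ffunP => v.
have : [set v; p v] \in gM q by rewrite -E; apply/imsetP; exists v.
case/imsetP => u _ E2.
have E3 : [set v; p v] = [set v; q v].
  have : v \in [set u; q u] by rewrite -E2 set21.
  rewrite in_set2 => /orP [/eqP Hv|/eqP Hv]; first by rewrite E2 -Hv.
  by rewrite E2 Hv (Hq u).2 setUC.
by apply: set2_eq E3; apply: neq_adj; exact: (Hp v).1.
Qed.

Lemma pm_key M : perfect_matching M -> forall v,
  exists u, [/\ adjKP v u, [set v; u] \in M & forall e, e \in M -> v \in e -> e = [set v; u]].
Proof.
case/andP => /forall_inP He /forallP Hc v.
have [e0 E0] := cards1P (Hc v).
have : e0 \in [set e in M | v \in e] by rewrite E0 set11.
rewrite inE => /andP [e0M ve0].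
have uniq_e : forall e, e \in M -> v \in e -> e = e0.
  by move=> e eM ve; apply/set1P; rewrite -E0 inE eM ve.
case/existsP: (He _ e0M) => x /existsP [y /andP [xy /eqP e0E]].
move: ve0; rewrite e0E in_set2 => /orP [/eqP vx|/eqP vy].
  subst x; exists y; split=> //; first by rewrite -e0E.
  by move=> e eM ve; rewrite (uniq_e e eM ve) e0E.
subst y; exists x; split; first by rewrite adj_sym.
  by rewrite setUC -e0E.
by move=> e eM ve; rewrite (uniq_e e eM ve) e0E setUC.
Qed.

Definition partner (M : {set {set vtx n}}) : {ffun vtx n -> vtx n} :=
  [ffun v => odflt v [pick u | [set v; u] \in M]].

Lemma partnerE M v u : perfect_matching M -> [set v; u] \in M -> partner M v = u.
Proof.
move=> pm vuM; have [w [vw vwM Hw]] := pm_key pm v.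
have Hu : forall u', [set v; u'] \in M -> u' = w.
  move=> u' Hu'; have E := Hw _ Hu' (set21 _ _).
  have : u' \in [set v; w] by rewrite -E set22.
  rewrite in_set2 => /orP [/eqP u'v|/eqP //].
  have : w \in [set v; u'] by rewrite E set22.
  by rewrite u'v setUid in_set1 => /eqP wv; move: vw; rewrite wv adj_irr.
rewrite /partner ffunE; case: pickP => [x /Hu -> /=|/(_ w)]; first by rewrite (Hu _ vuM).
by rewrite vwM.
Qed.

Lemma domino_inv : domino_count n = #|[set p | inv_ok p]|.
Proof.
rewrite /domino_count.
have -> : [set M | perfect_matching M] = gM @: [set p | inv_ok p].
  apply/setP => M; rewrite inE; apply/idP/imsetP => [pm|[p]]; last by rewrite inE => /gM_pm ? ->.
  have Hp : forall v, [set v; partner M v] \in M.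
    by move=> v; have [u [_ uM _]] := pm_key pm v; rewrite (partnerE pm uM).
  exists (partner M).
    rewrite inE; apply/inv_okP => v; have [u [vu uM _]] := pm_key pm v.
    rewrite (partnerE pm uM); split=> //; apply: partnerE => //; by rewrite setUC.
  apply/setP => e; apply/idP/imsetP => [eM|[v _ ->]] //.
  have : is_edge e by case/andP: pm => /forall_inP ->.
  case/existsP => x /existsP [y /andP [_ /eqP eE]].
  exists x => //; have [u [_ uM Hu]] := pm_key pm x.
  by rewrite (partnerE pm uM); apply: Hu => //; rewrite eE set21.
rewrite card_in_imset // => p q; rewrite !inE; exact: gM_inj.
Qed.

End A.


Lemma nth_Up x a : a < size x -> nth false (Up x) a = (nth 0 x a == 4).
Proof. by move=> h; rewrite (nth_map 0). Qed.
Lemma nth_Dn x a : a < size x -> nth false (Dn x) a = (nth 0 x a == 5).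
Proof. by move=> h; rewrite (nth_map 0). Qed.

Lemma vsE s : vs s = all (fun i => loc (nth [::] s i) &&
   (if i.+1 < size s then Dn (nth [::] s i.+1) == Up (nth [::] s i)
    else Up (nth [::] s i) == zeros)) (iota 0 (size s)).
Proof.
elim: s => [|x s IH] //.
rewrite [size _]/= [iota _ _]/=.
have -> : iota 1 (size s) = map (addn 1) (iota 0 (size s)) by rewrite -iotaDl.
rewrite /= all_map IH; rewrite andbA; congr (_ && _); by case: s {IH}.

Qed.

Section B.
Variable n : nat.
Implicit Types (u v w : vtx n).

Definition code v u : nat :=
  if u.2 == v.2 then nat_of_ord u.1 else if nat_of_ord u.2 == v.2.+1 then 4 else 5.
Definition dec v (c : nat) : vtx n :=
  if c < 4 then (inord c, v.2)
  else if c == 4 then (v.1, insubd v.2 v.2.+1) else (v.1, insubd v.2 v.2.-1).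

Lemma adj_cases v u : adjKP v u ->
  (u.2 = v.2 /\ u.1 != v.1) \/ (u.1 = v.1 /\ (nat_of_ord u.2 = v.2.+1 \/ (nat_of_ord u.2).+1 = v.2)).
Proof.
rewrite /adjKP /adjK4 /adjP => /orP [/andP [h1 /eqP h2]|/andP [/eqP h1 /orP [/eqP h2|/eqP h2]]].
- by left; rewrite h2 eq_sym.
- by right; split; [rewrite h1|left].
- by right; split; [rewrite h1|right].
Qed.

Lemma code_lt6 v u : code v u < 6.
Proof.
rewrite /code; case: ifP => _; first by apply: (ltn_trans (ltn_ord _)).
by case: ifP.
Qed.

Lemma dec_code v u : adjKP v u -> dec v (code v u) = u.
Proof.
case: u => a b; case: v => a' b'.
case/adj_cases => /= [[-> _]|[-> [h|h]]]; rewrite /code /dec /=.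
- by rewrite eqxx ltn_ord inord_val.
- have -> : (b == b') = false by apply/negbTE/eqP => E; move: h; rewrite E; lia.
  rewrite h (eqxx (nat_of_ord b').+1) /=; congr pair; apply: val_inj; rewrite val_insubd -h ltn_ord //.
- have -> : (b == b') = false by apply/negbTE/eqP => E; move: h; rewrite E; lia.
  rewrite -h (_ : (val b == (nat_of_ord b).+2) = false) /=; last by lia.
  by congr pair; apply: val_inj; rewrite val_insubd /= (ltn_trans _ (ltn_ord b')) // -h.
Qed.

Lemma code_dec v c : c < 6 -> (c == 4 -> v.2.+1 < n) -> (c == 5 -> 0 < v.2) ->
  code v (dec v c) = c.
Proof.
case: v => a b /= h6 h4 h5; rewrite /dec.
case: ifP => c4.
  by rewrite /code /= (eqxx b) inordK.
case: ifP => /eqP c4'.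
  subst c; have E : nat_of_ord (insubd b b.+1) = b.+1 by rewrite val_insubd h4.
  rewrite /code /= (_ : (insubd b b.+1 == b) = false); last first.
    by apply/negbTE/eqP => E2; move: E; rewrite E2; lia.
  by rewrite E (eqxx (nat_of_ord b).+1).
have c5 : c = 5 by move: h6 c4 c4'; lia.
subst c; have hb := h5 (eqxx _).
have E : nat_of_ord (insubd b b.-1) = b.-1.
  by rewrite val_insubd (leq_ltn_trans (leq_pred _) (ltn_ord b)).
rewrite /code /= (_ : (insubd b b.-1 == b) = false); last first.
  by apply/negbTE/eqP => E2; move: E; rewrite E2; lia.
rewrite E (_ : (b.-1 == b.+1) = false) //; lia.
Qed.

Lemma adj_dec v c : c < 6 -> (c < 4 -> c != v.1) -> (c == 4 -> v.2.+1 < n) ->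
  (c == 5 -> 0 < v.2) -> adjKP v (dec v c).
Proof.
case: v => a b /= h6 hl h4 h5; rewrite /dec /adjKP /adjK4 /adjP /=.
case: ifP => c4.
  rewrite (eqxx b) andbT; apply/orP; left; apply: contra (hl c4) => /eqP E.
  by rewrite E inordK.
case: ifP => /eqP c4'.
  subst c; rewrite (eqxx a) /= val_insubd (h4 (eqxx _)).
  by rewrite (eqxx (nat_of_ord b).+1).
have c5 : c = 5 by move: h6 c4 c4'; lia.
subst c; have hb := h5 (eqxx _).
rewrite /= (eqxx a) /= val_insubd (leq_ltn_trans (leq_pred _) (ltn_ord b)).
by rewrite prednK // (eqxx (nat_of_ord b)) !orbT.
Qed.

Definition letter (p : {ffun vtx n -> vtx n}) (b : 'I_n) :=
  [seq code (a, b) (p (a, b)) | a <- enum 'I_4].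
Definition enc (p : {ffun vtx n -> vtx n}) := [seq letter p b | b <- enum 'I_n].

Lemma size_enc p : size (enc p) = n.
Proof. by rewrite size_map size_enum_ord. Qed.
Lemma size_letter p b : size (letter p b) = 4.
Proof. by rewrite size_map size_enum_ord. Qed.

Lemma nth_enc p (b : 'I_n) : nth [::] (enc p) b = letter p b.
Proof.
rewrite (nth_map b) ?size_enum_ord //; congr letter; apply: ord_inj.
by rewrite nth_enum_ord.
Qed.

Lemma nth_letter p b (a : 'I_4) : nth 0 (letter p b) a = code (a, b) (p (a, b)).
Proof.
rewrite (nth_map a) ?size_enum_ord //; congr (code (_, _) (p (_, _))); apply: ord_inj;
by rewrite nth_enum_ord.
Qed.


Lemma adj_code4 v u : adjKP v u ->
  (code v u == 4) = (u.1 == v.1) && (nat_of_ord u.2 == v.2.+1).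
Proof.
case: u => a b; case: v => a' b' /=.
case/adj_cases => /= [[-> h]|[-> [h|h]]]; rewrite /code /= ?(eqxx b') ?(eqxx a').
- by rewrite (negbTE h) /=; apply/negbTE; move: (ltn_ord a); lia.
- have -> : (b == b') = false by apply/negbTE/eqP => E; move: h; rewrite E; lia.
  by rewrite h (eqxx (nat_of_ord b').+1).
- have -> : (b == b') = false by apply/negbTE/eqP => E; move: h; rewrite E; lia.
  have -> : (nat_of_ord b == b'.+1) = false by apply/negbTE; lia.
  by [].
Qed.

Lemma adj_code5 v u : adjKP v u ->
  (code v u == 5) = (u.1 == v.1) && ((nat_of_ord u.2).+1 == v.2).
Proof.
case: u => a b; case: v => a' b' /=.
case/adj_cases => /= [[-> h]|[-> [h|h]]]; rewrite /code /= ?(eqxx b') ?(eqxx a').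
- by rewrite (negbTE h) /=; apply/negbTE; move: (ltn_ord a); lia.
- have -> : (b == b') = false by apply/negbTE/eqP => E; move: h; rewrite E; lia.
  rewrite h (eqxx (nat_of_ord b').+1); apply/esym/negbTE; lia.
- have -> : (b == b') = false by apply/negbTE/eqP => E; move: h; rewrite E; lia.
  have -> : (nat_of_ord b == b'.+1) = false by apply/negbTE; lia.
  by rewrite h (eqxx (nat_of_ord b')).
Qed.

Lemma code_lt4 v u : code v u < 4 -> u.2 = v.2 /\ code v u = u.1.
Proof.
rewrite /code; case: ifP => [/eqP -> //|_]; by case: ifP.
Qed.

Lemma ord_pairE (a : 'I_4) (b : 'I_n) (u : vtx n) :
  (u.1 == a) && (nat_of_ord u.2 == b) = (u == (a, b)).
Proof.
case: u => x y /=; apply/idP/idP.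
  by case/andP => /eqP -> /eqP h; apply/eqP; congr pair; apply: ord_inj.
by move/eqP => [-> ->]; rewrite !eqxx.
Qed.

Lemma enc_valid p : inv_ok p -> valid (enc p).
Proof.
move/inv_okP => Hp.
have Hup : forall (A : 'I_4) (b b' : 'I_n), nat_of_ord b' = b.+1 ->
    (code (A, b') (p (A, b')) == 5) = (code (A, b) (p (A, b)) == 4).
  move=> A b b' hb; rewrite adj_code5 ?(Hp _).1 //= hb eqSS adj_code4 ?(Hp _).1 //= -hb.
  rewrite !ord_pairE; apply/eqP/eqP => h; by rewrite -h (Hp _).2.
rewrite /valid vsE size_enc; apply/andP; split.
  apply/allP => i; rewrite mem_iota add0n => /andP [_ hi].
  have -> : nth [::] (enc p) i = letter p (Ordinal hi) by exact: (nth_enc p (Ordinal hi)).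
  apply/andP; split.
    rewrite /loc; apply/allP => a'; rewrite mem_iota add0n => /andP [_ ha].
    have -> : nth 0 (letter p (Ordinal hi)) a' = code (Ordinal ha, Ordinal hi) (p (Ordinal ha, Ordinal hi))
      by exact: (nth_letter p (Ordinal hi) (Ordinal ha)).
    set v := (Ordinal ha, Ordinal hi); apply/implyP => /code_lt4 [h2 ->].
    have Hu : p v = ((p v).1, Ordinal hi) by case: (p v) h2 => x y /= ->.
    apply/andP; split.
      apply: contraTneq (Hp v).1 => h1.
      have -> : p v = v by rewrite Hu; congr pair; apply: ord_inj.
      by rewrite adj_irr.
    rewrite (nth_letter p (Ordinal hi) (p v).1) -Hu (Hp v).2 /code /= h2 (eqxx v.2).
    by [].
  case: ifP => hi1.
    have -> : nth [::] (enc p) i.+1 = letter p (Ordinal hi1) by exact: (nth_enc p (Ordinal hi1)).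
    apply/eqP; apply: (@eq_from_nth _ false); first by rewrite !size_map ?size_enum_ord.
    move=> a; rewrite size_map size_letter => ha.
    rewrite nth_Dn ?size_letter // nth_Up ?size_letter //.
    rewrite (nth_letter p _ (Ordinal ha)) (nth_letter p (Ordinal hi) (Ordinal ha)).
    exact: Hup.
  apply/eqP; apply: (@eq_from_nth _ false); first by rewrite size_map size_letter size_nseq.
  move=> a; rewrite size_map size_letter => ha.
  rewrite nth_Up ?size_letter // nth_nseq ha (nth_letter p (Ordinal hi) (Ordinal ha)).
  rewrite adj_code4 ?(Hp _).1 //=; apply/negbTE; apply/nandP; right.
  move: (ltn_ord (p (Ordinal ha, Ordinal hi)).2); move/negbT: hi1 => h1 h2.
  by apply/eqP => h3; rewrite -h3 h2 in h1.
case E: (enc p) => [|x s] //.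
have hn : 0 < n by rewrite -(size_enc p) E.
have -> : x = letter p (Ordinal hn) by rewrite -(nth_enc p (Ordinal hn)) E.
apply/eqP; apply: (@eq_from_nth _ false); first by rewrite size_map size_letter size_nseq.
move=> a; rewrite size_map size_letter => ha.
rewrite nth_Dn ?size_letter // nth_nseq ha (nth_letter p (Ordinal hn) (Ordinal ha)).
by rewrite adj_code5 ?(Hp _).1 //= andbF.
Qed.

Lemma enc_inj p q : inv_ok p -> inv_ok q -> enc p = enc q -> p = q.
Proof.
move=> /inv_okP Hp /inv_okP Hq E; apply/ffunP => -[a b].
have := congr1 (fun s => nth 0 (nth [::] s b) a) E.
rewrite /= !nth_enc !nth_letter => h.
by rewrite -(dec_code (Hp _).1) h dec_code // (Hq _).1.
Qed.

End B.

Section B3.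
Variable n : nat.
Variable s : seq (seq nat).
Hypothesis Hs : s \in words n.
Hypothesis Hv : valid s.

Lemma size_s : size s = n.
Proof. by move: Hs; rewrite /words mem_lists_of => /andP [/eqP]. Qed.

Lemma s_letter i : i < n -> nth [::] s i \in letters.
Proof.
move=> hi; move: Hs; rewrite /words mem_lists_of => /andP [_ /allP]; apply.
by rewrite mem_nth // size_s.
Qed.

Lemma size_si i : i < n -> size (nth [::] s i) = 4.
Proof. by move/s_letter; rewrite /letters mem_lists_of => /andP [/eqP]. Qed.

Definition cc i a := nth 0 (nth [::] s i) a.

Lemma f6 i a : i < n -> a < 4 -> cc i a < 6.
Proof.
move=> hi ha; move: (s_letter hi); rewrite /letters mem_lists_of => /andP [/eqP hs /allP H].
have := H (cc i a); rewrite -[mem (iota 0 6) _]/(_ \in iota 0 6) mem_iota add0n; apply; apply: mem_nth; by rewrite hs.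
Qed.

Lemma sv i : i < n -> loc (nth [::] s i) &&
   (if i.+1 < n then Dn (nth [::] s i.+1) == Up (nth [::] s i)
    else Up (nth [::] s i) == zeros).
Proof.
move=> hi; move: Hv; rewrite /valid vsE size_s => /andP [/allP H _]; apply: H.
by rewrite mem_iota add0n.
Qed.

Lemma fl i a : i < n -> a < 4 -> cc i a < 4 -> cc i a != a /\ cc i (cc i a) = a.
Proof.
move=> hi ha hc; case/andP: (sv hi) => /allP H _.
have := H a; rewrite mem_iota add0n ha => /(_ isT) /implyP /(_ hc) /andP [h1 /eqP h2].
by [].
Qed.

Lemma f4 i a : i < n -> a < 4 -> cc i a = 4 -> i.+1 < n /\ cc i.+1 a = 5.
Proof.
move=> hi ha hc; case/andP: (sv hi) => _; case: ifP => hi1 /eqP E.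
  split=> //; apply/eqP; rewrite /cc -nth_Dn ?size_si // E nth_Up ?size_si //.
  by rewrite -/(cc i a) hc.
have := congr1 (fun l => nth false l a) E; rewrite nth_Up ?size_si // nth_nseq ha.
by rewrite -/(cc i a) hc.
Qed.

Lemma f5 i a : i < n -> a < 4 -> cc i a = 5 -> 0 < i /\ cc i.-1 a = 4.
Proof.
move=> hi ha hc; case: i hi hc => [|i] hi hc.
  move: Hv; rewrite /valid; case E: s => [|x s'] /=; first by move: hi; rewrite -size_s E.
  case/andP => _ /eqP E2; have := congr1 (fun l => nth false l a) E2.
  have x0 : x = nth [::] s 0 by rewrite E.
  have hx : size x = 4 by rewrite x0 size_si.
  have hxa : nth 0 x a = 5 by rewrite -hc /cc -x0.
  by rewrite nth_Dn ?hx // nth_nseq ha hxa.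
split=> //=; have hi' : i < n by apply: ltnW.
case/andP: (sv hi') => _; rewrite hi => /eqP E.
have := congr1 (fun l => nth false l a) E; rewrite nth_Dn ?size_si // nth_Up ?size_si //.
by rewrite -/(cc i.+1 a) hc => /esym/eqP.
Qed.

Definition pdec : {ffun vtx n -> vtx n} := [ffun v => dec v (cc v.2 v.1)].

Lemma pdec_ok : inv_ok pdec.
Proof.
apply/inv_okP => -[a b].
have hb := ltn_ord b; have ha := ltn_ord a.
have h6 := f6 hb ha.
have E1 : pdec (a, b) = dec (a, b) (cc b a) by rewrite ffunE.
split.
  rewrite E1; apply: adj_dec => //= [hc|/eqP hc|/eqP hc]; first exact: (fl hb ha hc).1.
    exact: (f4 hb ha hc).1.
  exact: (f5 hb ha hc).1.
rewrite E1 {1}/dec /=; case: ifP => hc.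
  have [h1 h2] := fl hb ha hc.
  rewrite ffunE /= inordK // h2 /dec ha.
  by congr pair; apply: ord_inj; rewrite inordK.
case: ifP => /eqP hc4.
  have [h1 h2] := f4 hb ha hc4.
  have E : nat_of_ord (insubd b b.+1) = b.+1 by rewrite val_insubd h1.
  rewrite ffunE /= E h2 /dec /=; congr pair; apply: ord_inj.
  by rewrite val_insubd E /= (ltn_trans _ h1).
have hc5 : cc b a = 5 by move: h6 hc hc4; lia.
have [h1 h2] := f5 hb ha hc5.
have E : nat_of_ord (insubd b b.-1) = b.-1.
  by rewrite val_insubd (leq_ltn_trans (leq_pred _) hb).
rewrite ffunE /= E h2 /dec /=; congr pair; apply: ord_inj.
by rewrite val_insubd E prednK // hb.
Qed.

Lemma enc_pdec : enc pdec = s.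
Proof.
apply: (@eq_from_nth _ [::]); first by rewrite size_enc size_s.
move=> i; rewrite size_enc => hi.
rewrite (nth_enc pdec (Ordinal hi)).
apply: (@eq_from_nth _ 0); first by rewrite size_letter size_si.
move=> a; rewrite size_letter => ha.
rewrite (nth_letter pdec (Ordinal hi) (Ordinal ha)) ffunE /=.
apply: code_dec => /= [|/eqP hc|/eqP hc]; first exact: f6.
  exact: (f4 hi ha hc).1.
exact: (f5 hi ha hc).1.
Qed.

End B3.

Lemma card_inv n : #|[set p : {ffun vtx n -> vtx n} | inv_ok p]| = count valid (words n).
Proof.
rewrite -size_filter cardE.
have Hu : uniq [seq x <- words n | valid x] by rewrite filter_uniq // uniq_lists_of // uniq_lists_of // iota_uniq.
rewrite -(size_map (@enc n)); apply: perm_size; apply: uniq_perm => //.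
  rewrite map_inj_in_uniq ?enum_uniq // => p q; rewrite !mem_enum !inE; exact: enc_inj.
move=> x; rewrite mem_filter; apply/mapP/andP => [[p]|[xv xw]].
  rewrite mem_enum inE => pok ->; split; first exact: enc_valid.
  rewrite /words mem_lists_of size_enc eqxx /=; apply/allP => l /mapP [b _ ->].
  change (letter p b \in letters).
  rewrite /letters mem_lists_of size_letter /=; apply/allP => c /mapP [a _ ->].
  change (code (a, b) (p (a, b)) \in iota 0 6).
  by rewrite mem_iota code_lt6.
exists (pdec n x); first by rewrite mem_enum inE (pdec_ok xw xv).
by rewrite (enc_pdec xw xv).
Qed.


Definition Mv k := P k zeros.

Lemma zeros_states : zeros \in states. Proof. by rewrite mem_states. Qed.
Lemma Mv0 : Mv 0 = 3. Proof. by rewrite /Mv P_tab ?zeros_states //; vm_compute. Qed.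
Lemma Mv1 : Mv 1 = 16. Proof. by rewrite /Mv P_tab ?zeros_states //; vm_compute. Qed.
Lemma Mv2 : Mv 2 = 75. Proof. by rewrite /Mv P_tab ?zeros_states //; vm_compute. Qed.
Lemma recM k : (Mv k.+3 + Mv k = 4 * Mv k.+2 + 4 * Mv k.+1)%N.
Proof. exact: recP. Qed.

Lemma dominoE k : domino_count k.+1 = Mv k.
Proof. by rewrite domino_inv card_inv count_valid. Qed.

Local Open Scope ring_scope.

Lemma rec_root (R : comRingType) (x : R) m : x^+3 = 4*x^+2 + 4*x - 1 ->
  x^+m.+3 = 4*x^+m.+2 + 4*x^+m.+1 - x^+m.
Proof.
move=> h.
have e3 : x^+m.+3 = x^+m * x^+3 by rewrite -exprD addn3.
have e2 : x^+m.+2 = x^+m * x^+2 by rewrite -exprD addn2.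
have e1 : x^+m.+1 = x^+m * x by rewrite exprSr.
by rewrite e3 e2 e1 h; ring.
Qed.

Theorem theorem10 :
  (forall n : nat, (4 <= n)%N ->
     (domino_count n)%:Z =
       4 * (domino_count (n - 1)%N)%:Z + 4 * (domino_count (n - 2)%N)%:Z
       - (domino_count (n - 3)%N)%:Z :> int)
  /\
  (forall (R : rcfType) (n : nat), (1 <= n)%N ->
     (domino_count n)%:R =
       7%:R^-1 * (((5 + Num.sqrt 21) / 2) ^+ n.+1 + ((5 - Num.sqrt 21) / 2) ^+ n.+1
               + 2 * (-1) ^+ n) :> R).
Proof.
split.
  move=> [|[|[|[|k]]]] // _.
  rewrite !subSS !subn0 !dominoE.
  have := recM k; lia.
move=> R [|k] // _; rewrite dominoE.
set r := Num.sqrt (21 : R).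
have hr : r ^+ 2 = 21 by rewrite sqr_sqrtr // ler0n.
set a := (5 + r) / 2; set b := (5 - r) / 2.
have ha : a ^+ 2 = 5 * a - 1.
  apply/eqP; rewrite -subr_eq0; apply/eqP.
  have -> : a ^+ 2 - (5 * a - 1) = (r ^+ 2 - 21) / 4 by rewrite /a; field.
  by rewrite hr subrr mul0r.
have hb : b ^+ 2 = 5 * b - 1.
  apply/eqP; rewrite -subr_eq0; apply/eqP.
  have -> : b ^+ 2 - (5 * b - 1) = (r ^+ 2 - 21) / 4 by rewrite /b; field.
  by rewrite hr subrr mul0r.
have h3 : forall x : R, x ^+ 2 = 5 * x - 1 -> x ^+ 3 = 4 * x ^+ 2 + 4 * x - 1.
  move=> x hx; rewrite exprS hx.
  have -> : x * (5 * x - 1) = 5 * x ^+ 2 - x by ring.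
  by rewrite hx; ring.
have hm : (-1 : R) ^+ 3 = 4 * (-1) ^+ 2 + 4 * (-1) - 1 by ring.
pose c (m : nat) : R := 7%:R^-1 * (a ^+ m.+1 + b ^+ m.+1 + 2 * (-1) ^+ m).
have crec : forall m, c m.+3 = 4 * c m.+2 + 4 * c m.+1 - c m.
  move=> m; rewrite /c (@rec_root R a m.+1 (h3 _ ha)) (@rec_root R b m.+1 (h3 _ hb)) (@rec_root R (-1) m hm).
  ring.
have s1 : a + b = 5 by rewrite /a /b; field.
have s0 : a ^+ 0 + b ^+ 0 = 2 by rewrite !expr0.
have sr : forall j, a ^+ j.+2 + b ^+ j.+2 = 5 * (a ^+ j.+1 + b ^+ j.+1) - (a ^+ j + b ^+ j).
  move=> j.
  have e2 : forall x : R, x ^+ j.+2 = x ^+ j * x ^+ 2 by move=> x; rewrite -exprD addn2.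
  have e1 : forall x : R, x ^+ j.+1 = x ^+ j * x by move=> x; rewrite exprSr.
  by rewrite !e2 !e1 ha hb; ring.
have s2 : a ^+ 2 + b ^+ 2 = 23 by rewrite (sr 0) s0 !expr1 s1; ring.
have s3 : a ^+ 3 + b ^+ 3 = 110 by rewrite (sr 1) s2 !expr1 s1; ring.
have s4 : a ^+ 4 + b ^+ 4 = 527 by rewrite (sr 2) s3 s2; ring.
have c1 : c 1%N = 3 by rewrite /c s2; field.
have c2 : c 2%N = 16 by rewrite /c s3; field.
have c3 : c 3%N = 75 by rewrite /c s4; field.
have main : forall k, [/\ (Mv k)%:R = c k.+1, (Mv k.+1)%:R = c k.+2 & (Mv k.+2)%:R = c k.+3].
  elim=> [|j [h0 h1 h2]]; first by rewrite Mv0 Mv1 Mv2 c1 c2 c3.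
  split=> //.
  have e := congr1 (fun t => t%:R : R) (recM j).
  apply: (addIr (Mv j)%:R); rewrite -natrD e natrD !natrM h0 h1 h2 (crec j.+1).
  ring.
have [-> _ _] := main k.
by [].
Qed.
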